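(* Let $\mathcal{M}\subset\mathbb{R}^n$ be a locally symmetric $C^2$ submanifold with characteristic permutation $\sigma_*$, and let $\sigma\in\Sigma^n$ be a permutation each of whose cycles is contained either in $F:=\mathbb{N}_n\setminus\mathrm{supp}(\sigma_* )$ or in $\mathrm{supp}(\sigma_* )$. Let $\sigma^F$ (resp. $\sigma^M$) be the restriction of $\sigma$ to $F$ (resp. to $\mathrm{supp}(\sigma_* )$), and $\sigma_*^M$ the restriction of $\sigma_*$ to $\mathrm{supp}(\sigma_* )$. Then: $\sigma\sim\sigma_*$ iff $\sigma^F$ is the identity of $F$ and $P(\sigma^M)=P(\sigma_*^M)$; and $\sigma\prec\!\sim\sigma_*$ iff $\sigma^F$ is not the identity of $F$ and $P(\sigma^M)=P(\sigma_*^M)$.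
   Context: $\Sigma^n$ permutations of $\mathbb{N}_n$ acting by $(\sigma x)_i=x_{\sigma^{-1}(i)}$; $\mathrm{supp}(\sigma)$ the set of non-fixed indices; $P(\sigma)$ the partition into orbits of $\sigma$ (also used for permutations of a subset); $P(x)$ partition by equal coordinates; $\Delta(\sigma)=\{x:P(x)=P(\sigma)\}$. $\sigma\sim\sigma'$ means $P(\sigma)=P(\sigma')$; $\sigma\prec\sigma'$ means $P(\sigma')$ refines $P(\sigma)$ (every set of $P(\sigma)$ is a union of sets of $P(\sigma')$) and $P(\sigma)\ne P(\sigma')$. $\sigma\prec\!\sim\sigma'$ means $\sigma\prec\sigma'$ and every set of $P(\sigma)$ that is not a set of $P(\sigma')$ is a union of singleton sets of $P(\sigma')$. $\mathbb{R}^n_\ge=\{x:x_1\ge\cdots\ge x_n\}$; $B$ open ball. A set $S$ is locally symmetric if $S\cap\mathbb{R}^n_\ge\ne\emptyset$ and each $x\in S$ has $\delta>0$ with $\sigma(S\cap B(x,\delta))=S\cap B(x,\delta)$ for all $y\in S\cap B(x,\delta)$, all $\sigma$ with $\sigma y=y$; a locally symmetric $C^2$ submanifold is a connected $C^2$ submanifold without boundary which is locally symmetric. A characteristic permutation is a $\sigma_*$ with $\mathcal{M}\cap B(y,\rho)\subset\Delta(\sigma_* )$ for some $y\in\mathcal{M}$, $\rho>0$. *)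

(* Defs.v *)
From HB Require Import structures.
From mathcomp Require Import all_boot all_order all_algebra all_fingroup.
From mathcomp Require Import all_classical all_reals all_analysis.
Set Implicit Arguments. Unset Strict Implicit. Unset Printing Implicit Defensive.
Import Order.TTheory GRing.Theory Num.Theory.
Import numFieldNormedType.Exports.
Local Open Scope ring_scope.

Section Defs.
Variables (R : realType) (n : nat).
Local Notation V := 'rV[R]_n.

Definition supp (s : {perm 'I_n}) : {set 'I_n} := [set i | s i != i].

Definition Pperm (s : {perm 'I_n}) : {set {set 'I_n}} := porbits s.

Definition Pperm_on (s : {perm 'I_n}) (A : {set 'I_n}) : {set {set 'I_n}} :=
  [set porbit s i | i in A].

Definition Pvec (x : V) : {set {set 'I_n}} :=
  [set [set j | x 0 j == x 0 i] | i : 'I_n].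

Definition Delta (s : {perm 'I_n}) : set V := [set x | Pvec x = Pperm s].

(* "Q refines P": every set of P is a union of sets of Q *)
Definition refines (P Q : {set {set 'I_n}}) : Prop :=
  forall B, B \in P -> exists S : {set {set 'I_n}}, S \subset Q /\ B = finset.cover S.

Definition psim (s s' : {perm 'I_n}) : Prop := Pperm s = Pperm s'.

Definition pprec (s s' : {perm 'I_n}) : Prop :=
  refines (Pperm s) (Pperm s') /\ Pperm s <> Pperm s'.

Definition pprecsim (s s' : {perm 'I_n}) : Prop :=
  pprec s s' /\
  forall B, B \in Pperm s -> B \notin Pperm s' ->
    exists S : {set {set 'I_n}}, S \subset Pperm s' /\
      (forall C, C \in S -> #|C| = 1%N) /\ B = finset.cover S.

Local Open Scope classical_set_scope.

Definition pact (s : {perm 'I_n}) (x : V) : V := \row_i x 0 ((s^-1)%g i).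

Definition eball (x : V) (r : R) : set V :=
  [set y | Num.sqrt (\sum_i (x 0 i - y 0 i) ^+ 2) < r].

Definition Rge_cone : set V := [set x | forall i j : 'I_n, (i <= j)%N -> x 0 j <= x 0 i].

Definition locally_symmetric (S : set V) : Prop :=
  S `&` Rge_cone !=set0 /\
  forall x, S x -> exists2 d : R, 0 < d &
    forall y (s : {perm 'I_n}), (S `&` eball x d) y -> pact s y = y ->
      pact s @` (S `&` eball x d) = S `&` eball x d.

Definition C2_on (m : nat) (U : set V) (f : V -> 'rV[R]_m) : Prop :=
  forall x, U x ->
    {for x, continuous f} /\
    forall u v : V,
      derivable f x u /\ {for x, continuous ('D_u f)} /\
      derivable ('D_u f) x v /\ {for x, continuous ('D_v ('D_u f))}.

(* connected C^2 embedded submanifold without boundary: locally the zero set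
   of a C^2 submersion *)
Definition C2_submanifold (M : set V) : Prop :=
  connected M /\
  forall x, M x -> exists (d : nat) (U : set V) (phi : V -> 'rV[R]_d),
    [/\ open U, U x, C2_on U phi,
        (forall y, U y -> M y -> forall w : 'rV[R]_d, exists v : V, 'D_v phi y = w)
      & U `&` M = U `&` phi @^-1` [set 0]].

Definition locally_symmetric_C2_submanifold (M : set V) : Prop :=
  C2_submanifold M /\ locally_symmetric M.

Definition characteristic_perm (M : set V) (s : {perm 'I_n}) : Prop :=
  exists y, M y /\ exists2 rho : R, 0 < rho & M `&` eball y rho `<=` Delta s.

End Defs.

(* Main.v *)
Require Import Defs.
From HB Require Import structures.
From mathcomp Require Import all_boot all_order all_algebra all_fingroup.
From mathcomp Require Import all_classical all_reals all_analysis.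
Import Order.TTheory GRing.Theory Num.Theory.
Set Implicit Arguments.
Section Helpers.
Variable n : nat.
Implicit Types s t : {perm 'I_n}.

Lemma fix_porbit s x : s x = x -> porbit s x = [set x].
Proof.
move=> sx; apply/setP=> y; rewrite inE; apply/porbitP/eqP => [[i ->]|->];
  last by exists 0%N; rewrite expg0 perm1.
elim: i => [|i IH]; first by rewrite expg0 perm1.
by rewrite expgSr permM IH.
Qed.

Lemma porbit_fix s x : porbit s x = [set x] -> s x = x.
Proof.
move=> h; have : s x \in porbit s x by rewrite -{1}(expg1 s) mem_porbit.
by rewrite h inE => /eqP.
Qed.

Lemma porbits_eqP s t : porbits s = porbits t <-> forall x, porbit s x = porbit t x.
Proof.
split=> [h x|h].
  have : porbit s x \in porbits t by rewrite -h; apply: imset_f.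
  case/imsetP=> y _ e; rewrite e; apply/esym/eqP; rewrite eq_porbit_mem -e.
  exact: porbit_id.
by apply/setP=> B; apply/imsetP/imsetP=> -[y _ ->]; exists y; rewrite ?h.
Qed.

Lemma Pon_eqP s t (A : {set 'I_n}) :
  Pperm_on s A = Pperm_on t A <-> {in A, forall x, porbit s x = porbit t x}.
Proof.
split=> [h x xA|h]; last by apply: eq_in_imset.
have : porbit s x \in Pperm_on t A by rewrite -h; apply: imset_f.
case/imsetP=> y _ e; rewrite e; apply/esym/eqP; rewrite eq_porbit_mem -e.
exact: porbit_id.
Qed.

Lemma notsupp s i : (i \in ~: supp s) = (s i == i).
Proof. by rewrite !inE negbK. Qed.

Lemma sing_cover (st : {perm 'I_n}) (B : {set 'I_n}) :
  B \subset ~: supp st ->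
  exists S : {set {set 'I_n}}, S \subset Pperm st /\
      (forall C, C \in S -> #|C| = 1%N) /\ B = finset.cover S.
Proof.
move=> sB; exists [set [set j] | j in B]; split; [|split].
- rewrite /Pperm; apply/fintype.subsetP=> C /imsetP[j jB ->].
  have jF := fintype.subsetP sB j jB; rewrite notsupp in jF.
  by rewrite -(fix_porbit (eqP jF)); apply: imset_f.
- by move=> C /imsetP[j _ ->]; rewrite cards1.
- rewrite cover_imset; apply/setP=> x; apply/idP/bigcupP.
    by move=> xB; exists x; rewrite ?inE.
  by case=> j jB; rewrite inE => /eqP ->.
Qed.

End Helpers.

Local Open Scope classical_set_scope.
Local Open Scope ring_scope.

Theorem proposition3p31 (R : realType) (n : nat) (M : set 'rV[R]_n)
    (sstar s : {perm 'I_n}) :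
  locally_symmetric_C2_submanifold M ->
  characteristic_perm M sstar ->
  (forall C, C \in porbits s ->
     C \subset ~: supp sstar \/ C \subset supp sstar) ->
  (psim s sstar <->
     (forall i, i \in ~: supp sstar -> s i = i) /\
     Pperm_on s (supp sstar) = Pperm_on sstar (supp sstar)) /\
  (pprecsim s sstar <->
     ~ (forall i, i \in ~: supp sstar -> s i = i) /\
     Pperm_on s (supp sstar) = Pperm_on sstar (supp sstar)).
Proof.
move=> _ _ Hc.
set A := supp sstar.
have part1 : psim s sstar <->
     (forall i, i \in ~: A -> s i = i) /\ Pperm_on s A = Pperm_on sstar A.
  rewrite /psim /Pperm porbits_eqP Pon_eqP; split=> [h|[hF hA] x].
    split=> [i iF|x _]; last exact: h.
    rewrite notsupp in iF; apply: porbit_fix.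
    by rewrite h (fix_porbit (eqP iF)).
  case: (boolP (x \in A)) => xA; first exact: hA.
  have xF : x \in ~: A by rewrite inE xA.
  rewrite (fix_porbit (hF x xF)); rewrite notsupp in xF.
  by rewrite (fix_porbit (eqP xF)).
split; first exact: part1.
rewrite /pprecsim /pprec /Pperm Pon_eqP.
split=> [[[ref neq] H2]|[nF hA]].
  have hA : {in A, forall x, porbit s x = porbit sstar x}.
    move=> i iA.
    have Bin : porbit s i \in porbits s by apply: imset_f.
    case: (boolP (porbit s i \in porbits sstar)) => Bst.
      case/imsetP: Bst => y _ e; rewrite e; apply/esym/eqP; rewrite eq_porbit_mem -e.
      exact: porbit_id.
    case: (H2 _ Bin Bst) => S [sS [c1 cov]].
    have : i \in finset.cover S by rewrite -cov porbit_id.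
    case/bigcupP => C CS iC.
    have /cards1P[x Cx] : #|C| == 1%N by rewrite c1.
    move: iC; rewrite Cx inE => /eqP ix; subst x.
    have : C \in porbits sstar by apply: (fintype.subsetP sS).
    case/imsetP=> y _ e.
    have e2 : porbit sstar i = [set i]%SET.
      rewrite -Cx e; apply/eqP; rewrite eq_porbit_mem -e Cx inE //.
    move: iA; rewrite /A inE (porbit_fix e2) eqxx //.
  split=> //; move=> hF; apply: neq; apply/porbits_eqP => x.
  case: (boolP (x \in A)) => xA; first exact: hA.
  have xF : x \in ~: A by rewrite inE xA.
  rewrite (fix_porbit (hF x xF)); rewrite notsupp in xF.
  by rewrite (fix_porbit (eqP xF)).
have [i [iF si]] : exists i, i \in ~: A /\ s i != i.
  apply: contrapT => hn; apply: nF => i iF; apply/eqP; apply: contrapT => h.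
  by apply: hn; exists i; split => //; apply/negP.
have Fcase : forall j, j \in ~: A -> porbit s j \subset ~: A.
  move=> j jF; have : porbit s j \in porbits s by apply: imset_f.
  case/Hc => // sub; have := fintype.subsetP sub j (porbit_id _ _).
  by move: jF; rewrite inE => /negbTE ->.
split; [split|].
- move=> B /imsetP[j _ ->].
  case: (boolP (j \in A)) => jA.
    exists [set porbit s j]%SET; split; last by rewrite cover1.
    by rewrite finset.sub1set hA //; apply: imset_f.
  have jF : j \in ~: A by rewrite inE jA.
  case: (sing_cover (Fcase j jF)) => S [? [_ ?]].
  by exists S.
- move/porbits_eqP => h.
  move: (iF); rewrite notsupp => /eqP fi.
  move: (h i); rewrite (fix_porbit fi) => /porbit_fix.
  by move/eqP; rewrite (negbTE si).
- move=> B /imsetP[j _ ->] Bn.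
  case: (boolP (j \in A)) => jA.
    by move: Bn; rewrite hA // imset_f.
  have jF : j \in ~: A by rewrite inE jA.
  exact: (sing_cover (Fcase j jF)).
Qed.
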